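(* Let $T \ge 1$ and let $Q_0, \ldots, Q_T$ be real matrices with $Q_t \in \mathbb R^{p_t \times n_x}$, such that the row space of $Q_t$ contains the row space of $Q_{t+1}$ for $t = 0, \ldots, T-1$. For vectors $\rho_{t+1|0} \in \mathbb R^{p_{t+1}}$, $t = 0, \ldots, T-1$, define $\rho_{t|1} := (Q_t')^+ Q_{t+1}' \rho_{t+1|0}$ for $t = 0,\ldots,T-1$ and $$\pi_5 := \frac14 \sum_{t=0}^{T-1} \big(|\rho_{t+1|0}|^2 - |\rho_{t|1}|^2\big).$$ Then $\pi_5 \ge 0$ for all $\rho_{1|0}, \ldots, \rho_{T|0}$ if and only if $\|Q_{t+1} Q_t^+\| \le 1$ for $t = 0, \ldots, T-1$.
   Context: For a matrix $M$, $M'$ is its transpose, $M^+$ its Moore–Penrose pseudoinverse, and $\|M\|$ its maximum singular value. $|\cdot|$ is the Euclidean norm. *)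

(* Defs.v *)
From HB Require Import structures.
From mathcomp Require Import all_boot all_order all_algebra.
From mathcomp Require Import classical_sets reals.
Set Implicit Arguments. Unset Strict Implicit. Unset Printing Implicit Defensive.
Import Order.TTheory GRing.Theory Num.Theory.
Local Open Scope ring_scope.
Local Open Scope classical_set_scope.

Definition vnorm {R : realType} {n : nat} (v : 'cV[R]_n) : R :=
  Num.sqrt (\sum_(i < n) v i ord0 ^+ 2).

Definition penrose {R : realType} {m n : nat} (A : 'M[R]_(m, n)) (X : 'M[R]_(n, m)) : Prop :=
  [/\ A *m X *m A = A, X *m A *m X = X,
      (A *m X)^T = A *m X & (X *m A)^T = X *m A].

(* Moore-Penrose pseudoinverse (exists and is unique; chosen classically) *)
Definition pinv {R : realType} {m n : nat} (A : 'M[R]_(m, n)) : 'M[R]_(n, m) :=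
  xget 0 [set X | penrose A X].

(* Spectral norm (maximum singular value) = operator norm induced by the
   Euclidean norm: sup { |M x| : |x| <= 1 } *)
Definition opnorm {R : realType} {m n : nat} (M : 'M[R]_(m, n)) : R :=
  sup [set vnorm (M *m x) | x in [set x : 'cV[R]_n | vnorm x <= 1]].

(* Main.v *)
Require Import Defs.
From HB Require Import structures.
From mathcomp Require Import all_boot all_order all_algebra.
From mathcomp Require Import boolp classical_sets reals.
From mathcomp Require Import ring lra.
Set Implicit Arguments. Unset Strict Implicit.
Import Order.TTheory GRing.Theory Num.Theory.
Local Open Scope ring_scope.

Section S.
Variable R : realType.

Definition sq {n} (v : 'cV[R]_n) : R := \sum_(i < n) v i ord0 ^+ 2.
Definition ip {n} (a b : 'cV[R]_n) : R := \sum_(i < n) a i ord0 * b i ord0.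

Lemma sq_ge0 n (v : 'cV[R]_n) : 0 <= sq v.
Proof. by apply: sumr_ge0 => i _; apply: sqr_ge0. Qed.

Lemma vnorm_sq n (v : 'cV[R]_n) : vnorm v ^+ 2 = sq v.
Proof. by rewrite /vnorm sqr_sqrtr // sq_ge0. Qed.

Lemma vnorm_ge0 n (v : 'cV[R]_n) : 0 <= vnorm v.
Proof. exact: sqrtr_ge0. Qed.

Lemma vnorm_le n m (a : 'cV[R]_n) (b : 'cV[R]_m) : (vnorm a <= vnorm b) = (sq a <= sq b).
Proof. by rewrite /vnorm ler_sqrt // sq_ge0. Qed.

Lemma ipE n (a b : 'cV[R]_n) : ip a b = (a^T *m b) ord0 ord0.
Proof. by rewrite /ip mxE; apply: eq_bigr => i _; rewrite mxE. Qed.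

Lemma sqE n (a : 'cV[R]_n) : sq a = ip a a.
Proof. by apply: eq_bigr => i _; rewrite expr2. Qed.

Lemma ip_le n (a b : 'cV[R]_n) : 2 * ip a b <= sq a + sq b.
Proof.
rewrite /ip /sq mulr_sumr -big_split /=; apply: ler_sum => i _.
by rewrite -subr_ge0 (_ : _ - _ = (a i ord0 - b i ord0)^+2) ?sqr_ge0 //; ring.
Qed.

Lemma sq_scale n (c : R) (a : 'cV[R]_n) : sq (c *: a) = c ^+ 2 * sq a.
Proof. rewrite /sq mulr_sumr; apply: eq_bigr => i _; rewrite mxE; ring. Qed.

Lemma vnorm_scale n (c : R) (a : 'cV[R]_n) : vnorm (c *: a) = `|c| * vnorm a.
Proof. by rewrite /vnorm -/(sq _) sq_scale sqrtrM ?sqr_ge0 // sqrtr_sqr. Qed.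

Lemma sq_eq0 n (a : 'cV[R]_n) : sq a = 0 -> a = 0.
Proof.
move=> /eqP; rewrite /sq psumr_eq0 => [/allP H|i _]; last exact: sqr_ge0.
apply/matrixP => i j; rewrite (ord1 j) mxE.
by have /implyP/(_ isT) := H i (mem_index_enum _); rewrite sqrf_eq0 => /eqP.
Qed.

Lemma transpose_contr n m (M : 'M[R]_(m, n)) :
  (forall y, sq (M^T *m y) <= sq y) -> forall x, sq (M *m x) <= sq x.
Proof.
move=> H x; set y := M *m x.
have E : ip (M^T *m y) x = sq y.
  by rewrite sqE !ipE /y trmx_mul trmxK !mulmxA.
have := ip_le (M^T *m y) x; rewrite E => Hle.
have := H y; lra.
Qed.

Lemma transpose_contr_iff n m (M : 'M[R]_(m, n)) :
  (forall y, sq (M^T *m y) <= sq y) <-> forall x, sq (M *m x) <= sq x.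
Proof.
split; first exact: transpose_contr.
by move=> H; apply: transpose_contr; rewrite trmxK.
Qed.


Lemma sq0 n : sq (0 : 'cV[R]_n) = 0.
Proof. by rewrite /sq big1 // => i _; rewrite mxE expr0n. Qed.

Lemma normK (x : R) : `|x| ^+ 2 = x ^+ 2.
Proof. exact: real_normK (num_real x). Qed.

Lemma entry_le n (x : 'cV[R]_n) j : x j ord0 ^+ 2 <= sq x.
Proof.
rewrite /sq (bigD1 j) //= lerDl; apply: sumr_ge0 => i _; exact: sqr_ge0.
Qed.

Lemma bounded n m (M : 'M[R]_(m, n)) :
  exists B, forall x, vnorm x <= 1 -> vnorm (M *m x) <= B.
Proof.
exists (Num.sqrt (\sum_(i < m) (\sum_(j < n) `|M i j|) ^+ 2)) => x Hx.
rewrite /vnorm ler_sqrt; last by apply: sumr_ge0 => i _; exact: sqr_ge0.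
have Hsq : sq x <= 1 by rewrite -vnorm_sq; have := vnorm_ge0 x; nra.
have Hxj : forall j, `|x j ord0| <= 1.
  move=> j; have := entry_le x j; rewrite -normK => H.
  have := normr_ge0 (x j ord0); nra.
apply: ler_sum => i _; rewrite -normK [in X in _ <= X]/GRing.exp /=.
have Hi : `|(M *m x) i ord0| <= \sum_(j < n) `|M i j|.
  rewrite mxE; apply: le_trans (ler_norm_sum _ _ _) _.
  apply: ler_sum => j _; rewrite normrM.
  by rewrite -[X in _ <= X]mulr1 ler_wpM2l.
have := normr_ge0 ((M *m x) i ord0); rewrite expr2; nra.
Qed.

Lemma opnormP n m (M : 'M[R]_(m, n)) :
  opnorm M <= 1 <-> forall x, sq (M *m x) <= sq x.
Proof.
split.
- move=> H x.
  have Hub : forall z, vnorm z <= 1 -> vnorm (M *m z) <= 1.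
    move=> z Hz; apply: le_trans H.
    have [B HB] := bounded M.
    apply: ub_le_sup; last by exists z.
    by exists B => _ [w Hw <-]; apply: HB.
  have [Hx0|Hx0] := eqVneq (sq x) 0.
    by rewrite (sq_eq0 Hx0) mulmx0 !sq0.
  have Hpos : 0 < vnorm x by rewrite /vnorm sqrtr_gt0 lt_neqAle eq_sym Hx0 sq_ge0.
  have := Hub ((vnorm x)^-1 *: x).
  rewrite vnorm_scale -scalemxAr vnorm_scale ger0_norm ?invr_ge0 ?vnorm_ge0 //.
  rewrite mulVf ?gt_eqF // lexx => /(_ isT).
  rewrite ler_pdivrMl // mulr1 vnorm_le //.
- move=> H; apply: ge_sup.
    by exists (vnorm (M *m 0)), 0 => //=; rewrite /vnorm /= big1 ?sqrtr0 // => i _; rewrite mxE expr0n.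
  move=> _ [z Hz <-]; apply: le_trans Hz.
  by rewrite vnorm_le.
Qed.


Lemma penrose_tr m n (A : 'M[R]_(m, n)) X : penrose A X -> penrose A^T X^T.
Proof.
case=> h1 h2 h3 h4; split.
- by rewrite -!trmx_mul mulmxA h1.
- by rewrite -!trmx_mul mulmxA h2.
- by rewrite -trmx_mul h4.
- by rewrite -trmx_mul h3.
Qed.

Lemma penrose_uniq m n (A : 'M[R]_(m, n)) X Y :
  penrose A X -> penrose A Y -> X = Y.
Proof.
case=> h1 h2 h3 h4 [k1 k2 k3 k4].
have eX : X = X *m A *m Y.
  have hAt : A^T = A^T *m (A *m Y).
    by rewrite -k3 -trmx_mul k1.
  rewrite -{1}h2 -mulmxA -h3 trmx_mul hAt.
  by rewrite (mulmxA X^T) -trmx_mul h3 !mulmxA h2.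
have eY : Y = X *m A *m Y.
  have hAt : A^T = (X *m A) *m A^T.
    by rewrite -h4 -trmx_mul mulmxA h1.
  rewrite -{1}k2 -k4 trmx_mul hAt.
  by rewrite -(mulmxA (X *m A) A^T Y^T) -trmx_mul k4 -(mulmxA (X *m A)) k2.
by rewrite eX -eY.
Qed.

Lemma pinv_tr m n (A : 'M[R]_(m, n)) : pinv A^T = (pinv A)^T.
Proof.
rewrite /pinv.
have [[X hX]|nX] := pselect (exists X, penrose A X).
  have hP := xgetPex 0 (ex_intro _ X hX).
  apply: penrose_uniq (penrose_tr hP).
  apply: (xgetPex 0); exists X^T; exact: penrose_tr.
rewrite !xgetPN ?trmx0 //.
  by move=> X hX; apply: nX; exists X.
move=> Y hY; apply: nX; exists Y^T.
by have := penrose_tr hY; rewrite trmxK.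
Qed.

Lemma termE a b nx (A : 'M[R]_(a, nx)) (B : 'M[R]_(b, nx)) (r : 'cV[R]_b) :
  vnorm r ^+ 2 - vnorm (pinv A^T *m B^T *m r) ^+ 2
  = sq r - sq ((B *m pinv A)^T *m r).
Proof. by rewrite !vnorm_sq trmx_mul pinv_tr. Qed.

End S.

Theorem proposition2 (R : realType) (T nx : nat) (p : nat -> nat)
  (Q : forall t : nat, 'M[R]_(p t, nx)) :
  (1 <= T)%N ->
  (forall t : nat, (t < T)%N -> (Q t.+1 <= Q t)%MS) ->
  ((forall rho : forall t : nat, 'cV[R]_(p t),
      0 <= 4^-1 * \sum_(t < T)
             (vnorm (rho t.+1) ^+ 2
              - vnorm (pinv (Q t)^T *m (Q t.+1)^T *m rho t.+1) ^+ 2))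
   <-> (forall t : nat, (t < T)%N -> opnorm (Q t.+1 *m pinv (Q t)) <= 1)).
Proof.
move=> _ _; split.
- move=> H t Ht; apply/opnormP/transpose_contr_iff => y.
  pose rho (s : nat) : 'cV[R]_(p s) :=
    \col_(i < p s) (if s == t.+1 then
       \sum_(k < p t.+1 | val k == val i) y k ord0 else 0).
  have r1 : rho t.+1 = y.
    apply/matrixP => i j; rewrite (ord1 j) mxE eqxx (big_pred1 i) // => k /=.
  have r0 : forall s, s != t.+1 -> rho s = 0.
    by move=> s hs; apply/matrixP => i j; rewrite !mxE (negbTE hs).
  have := H rho; rewrite (bigD1 (Ordinal Ht)) //= big1.
    rewrite r1 termE addr0 pmulr_rge0 ?invr_gt0 ?ltr0n // subr_ge0; exact.
  move=> s hs; rewrite r0 ?termE ?mulmx0 ?sq0 ?subrr //.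
- move=> H rho; apply: mulr_ge0; first by rewrite invr_ge0 ler0n.
  apply: sumr_ge0 => t _; rewrite termE subr_ge0.
  by move: (H t (ltn_ord t)) => /opnormP/transpose_contr_iff; apply.
Qed.
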